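(* Let $k\geq 2$ be an integer and let $G=(V,E)$ be a graph on $n$ vertices. Let $\sim$ be a symmetric binary relation on $V$ such that for every $u\in V$ and $v\in V$, $v$ has at most $s$ neighbours $w$ with $u\sim w$. Then the number of homomorphic $2k$-cycles $(x_1,\dots,x_{2k})$ in $G$ such that $x_i\sim x_j$ for some $i\neq j$ is at most $$32k^{3/2}s^{1/2}\Delta(G)^{1/2}n^{\frac{1}{2k}}\hom(C_{2k},G)^{1-\frac{1}{2k}}.$$
   Context: A homomorphic $2k$-cycle in $G$ is a tuple $(x_1,\dots,x_{2k})\in V^{2k}$ with $x_ix_{i+1}\in E$ for all $1\leq i\leq 2k$, where $x_{2k+1}:=x_1$. $\hom(H,G)$ denotes the number of graph homomorphisms from $H$ to $G$. $\Delta(G)$ is the maximum degree. *)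

(* Defs.v *)
From mathcomp Require Import all_boot all_order all_algebra.
From mathcomp Require Import all_classical all_reals all_analysis.
Set Implicit Arguments. Unset Strict Implicit. Unset Printing Implicit Defensive.
Import Order.TTheory GRing.Theory Num.Theory.

Definition simple_graph (V : finType) (e : rel V) : Prop :=
  symmetric e /\ irreflexive e.

Definition cycle_rel (m : nat) : rel 'I_m :=
  fun i j => (j == ordS i) || (i == ordS j).

Definition hom_count (VH : finType) (eH : rel VH) (VG : finType) (eG : rel VG) : nat :=
  #|[set f : {ffun VH -> VG} | [forall x, forall y, eH x y ==> eG (f x) (f y)]]|.

Definition hom_cycle (V : finType) (e : rel V) (m : nat) (x : {ffun 'I_m -> V}) : bool :=
  [forall i, e (x i) (x (ordS i))].

Definition max_deg (V : finType) (e : rel V) : nat :=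
  \max_(v : V) #|[set w | e v w]|.

(* Main.v *)
Require Import Defs.
From mathcomp Require Import all_boot all_order all_algebra.
From mathcomp Require Import all_classical all_reals all_analysis.
From mathcomp Require Import zify ring lra.
Set Implicit Arguments. Unset Strict Implicit. Unset Printing Implicit Defensive.

Lemma AGM2n x y : 2 * (x * y) <= x ^ 2 + y ^ 2.
Proof. have := (nat_AGM2 x y).1; rewrite sqrnD; lia. Qed.

Lemma CS_nat (I : finType) (f g : I -> nat) :
  (\sum_i f i * g i) ^ 2 <= (\sum_i f i ^ 2) * (\sum_i g i ^ 2).
Proof.
rewrite -(leq_pmul2l (isT : 0 < 2)).
have -> : (\sum_i f i * g i) ^ 2 = \sum_i \sum_j (f i * g j) * (f j * g i).
  rewrite expnS expn1 big_distrl /=; apply: eq_bigr => i _.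
  rewrite big_distrr /=; apply: eq_bigr => j _; ring.
have -> : (\sum_i f i ^ 2) * (\sum_i g i ^ 2) = \sum_i \sum_j (f i * g j) ^ 2.
  rewrite big_distrl /=; apply: eq_bigr => i _.
  rewrite big_distrr /=; apply: eq_bigr => j _; ring.
rewrite big_distrr /=.
have -> : 2 * (\sum_i \sum_j (f i * g j) ^ 2) =
   \sum_i \sum_j ((f i * g j) ^ 2 + (f j * g i) ^ 2).
  rewrite mul2n -addnn; rewrite {2}exchange_big /= -big_split /=.
  by apply: eq_bigr => i _; rewrite -big_split.
apply: leq_sum => i _; rewrite big_distrr /=; apply: leq_sum => j _.
exact: AGM2n.
Qed.

Section Walks.
Variables (V : finType) (E : rel V).
Hypothesis Esym : symmetric E.

Fixpoint W (m : nat) (a b : V) : nat :=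
  if m is m'.+1 then \sum_w W m' a w * E w b else (a == b).

Lemma W_comp m n a b : W (m + n) a b = \sum_c W m a c * W n c b.
Proof.
elim: n b => [|n IH] b /=.
  rewrite addn0 (bigD1 b) //= eqxx muln1 big1 ?addn0 // => c /negbTE.
  by rewrite eq_sym => ->; rewrite muln0.
rewrite addnS /=.
under eq_bigr => w _ do rewrite IH big_distrl /=.
rewrite exchange_big /=; apply: eq_bigr => c _.
by rewrite big_distrr /=; apply: eq_bigr => w _; rewrite mulnA.
Qed.

Lemma W1 a b : W 1 a b = E a b.
Proof.
rewrite /= (bigD1 a) //= eqxx mul1n big1 ?addn0 // => c /negbTE.
by rewrite eq_sym => ->.
Qed.

Lemma W_sym m a b : W m a b = W m b a.
Proof.
elim: m a b => [|m IH] a b; first by rewrite /= eq_sym.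
have -> : W m.+1 a b = \sum_c E a c * W m c b.
  by rewrite -add1n W_comp; under eq_bigr do rewrite W1.
by rewrite [RHS]/=; apply: eq_bigr => c _; rewrite IH Esym mulnC.
Qed.

Definition hh m := \sum_(p : V * V) W m p.1 p.2 ^ 2.

Lemma hh_shift m :
  \sum_(p : V * V) W m.+1 p.1 p.2 * W m.+1 p.1 p.2 =
  \sum_(p : V * V) W m p.1 p.2 * W m.+2 p.1 p.2.
Proof.
rewrite -!(pair_bigA _ (fun u v => W _ u v * W _ u v)) /=.
apply: eq_bigr => u _.
have -> : \sum_v W m.+1 u v * W m.+1 u v =
   \sum_v \sum_w W m u w * E w v * W m.+1 u v.
  by apply: eq_bigr => v _; rewrite /= big_distrl.
rewrite exchange_big /=; apply: eq_bigr => w _.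
rewrite /= big_distrr /=; apply: eq_bigr => v _.
by rewrite Esym; ring.
Qed.

Lemma hh_logconv m : hh m.+1 ^ 2 <= hh m * hh m.+2.
Proof.
have -> : hh m.+1 = \sum_(p : V * V) W m p.1 p.2 * W m.+2 p.1 p.2.
  by rewrite -hh_shift; apply: eq_bigr => p _; rewrite mulnn.
exact: CS_nat.
Qed.

Lemma hh0 : hh 0 = #|V|.
Proof.
rewrite /hh -(pair_bigA _ (fun u v => W 0 u v ^ 2)) /= -sum1_card.
apply: eq_bigr => u _; rewrite (bigD1 u) //= eqxx big1 // => v.
by rewrite eq_sym => /negbTE ->.
Qed.

Lemma hh_chain a : hh a ^ a.+1 <= hh 0 * hh a.+1 ^ a.
Proof.
elim: a => [|a IH]; first by rewrite expn0 expn1 muln1.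
have H2 := hh_logconv a.
case: (posnP (hh a.+1)) => [->|hpos]; first by rewrite exp0n.
have H3 : hh a.+1 ^ a * hh a.+1 ^ a.+2 <= hh a.+1 ^ a * (hh 0 * hh a.+2 ^ a.+1).
  rewrite -expnD addnS -addSn addnn -mul2n expnM.
  apply: (@leq_trans ((hh a * hh a.+2) ^ a.+1)); first by rewrite leq_exp2r.
  rewrite expnMn mulnA [_ * hh 0]mulnC.
  by rewrite leq_mul2r IH orbT.
by rewrite leq_pmul2l ?expn_gt0 ?hpos in H3.
Qed.

Definition walk m (p : {ffun 'I_m.+1 -> V}) : bool :=
  all (fun i => E (p (inord i)) (p (inord i.+1))) (iota 0 m).

Definition join m (g : {ffun 'I_m.+1 -> V}) (c : V) : {ffun 'I_m.+2 -> V} :=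
  [ffun i : 'I_m.+2 => if (i : nat) <= m then g (inord i) else c].

Lemma join_le m g c i : i <= m -> @join m g c (inord i) = g (inord i).
Proof. by move=> im; rewrite ffunE inordK ?im //; lia. Qed.

Lemma join_last m g c : @join m g c (inord m.+1) = c.
Proof. by rewrite ffunE inordK // ltnn. Qed.

Lemma join_bij m : bijective (fun gc : {ffun 'I_m.+1 -> V} * V => join gc.1 gc.2).
Proof.
exists (fun p : {ffun 'I_m.+2 -> V} => ([ffun i : 'I_m.+1 => p (inord i)], p (inord m.+1))).
  move=> [g c] /=; rewrite join_last; congr (_, _).
  apply/ffunP => i; rewrite ffunE join_le ?inord_val //; exact: (ltn_ord i).
move=> p; apply/ffunP => i; rewrite ffunE.
case: ifP => him; first by rewrite ffunE inordK ?inord_val //; lia.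
congr (p _); apply/val_inj; rewrite /= inordK //; have := ltn_ord i; lia.
Qed.

Lemma walk_join m g c : walk (@join m g c) = walk g && E (g (inord m)) c.
Proof.
rewrite /walk.
have -> : iota 0 m.+1 = iota 0 m ++ [:: m] by rewrite -addn1 iotaD.
rewrite all_cat /= andbT.
rewrite join_le // join_last; congr (_ && _).
apply: eq_in_all => i; rewrite mem_iota => /andP[_ hi].
by rewrite !join_le //; lia.
Qed.

Lemma sum_join m (F : {ffun 'I_m.+2 -> V} -> nat) :
  \sum_p F p = \sum_g \sum_c F (@join m g c).
Proof.
rewrite (reindex (fun gc : {ffun 'I_m.+1 -> V} * V => join gc.1 gc.2)) /=.
  by rewrite -(pair_bigA _ (fun g c => F (join g c))).
by apply: onW_bij; exact: join_bij.
Qed.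

Lemma sum_ffun1 (F : {ffun 'I_1 -> V} -> nat) :
  \sum_p F p = \sum_c F [ffun=> c].
Proof.
rewrite (reindex (fun c : V => [ffun=> c])) //.
apply: onW_bij; exists (fun p : {ffun 'I_1 -> V} => p ord0) => [c|p].
  by rewrite ffunE.
by apply/ffunP => i; rewrite !ffunE (ord1 i).
Qed.

Lemma walk_count m a b :
  \sum_(p : {ffun 'I_m.+1 -> V}) (walk p && (p (inord 0) == a) && (p (inord m) == b)) = W m a b.
Proof.
elim: m a b => [|m IH] a b.
  rewrite sum_ffun1 /= (bigD1 a) //= !ffunE eqxx big1 ?addn0 //.
  by move=> c /negbTE; rewrite !ffunE => ->.
rewrite (@sum_join m) /=.
have -> : \sum_(g : {ffun 'I_m.+1 -> V}) \sum_(c : V)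
   (walk (join g c) && (join g c (inord 0) == a) && (join g c (inord m.+1) == b) : nat)
  = \sum_(g : {ffun 'I_m.+1 -> V}) (walk g && (g (inord 0) == a)) * E (g (inord m)) b.
  apply: eq_bigr => g _; rewrite (bigD1 b) //= join_last eqxx walk_join join_le //.
  rewrite big1 ?addn0; last first.
    by move=> c /negbTE; rewrite join_last => ->; rewrite andbF.
  by case: (walk g); case: (g (inord 0) == a); case: (E _ b).
rewrite (partition_big (fun g : {ffun 'I_m.+1 -> V} => g (inord m)) xpredT) //=.
apply: eq_bigr => w _; rewrite -IH big_distrl /= big_mkcond /=.
by apply: eq_bigr => g _; case: eqP => [->|]; rewrite ?andbT ?andbF.
Qed.

Lemma sum_eqb (a : V) (H : V -> nat) : \sum_v (a == v) * H v = H a.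
Proof.
rewrite (bigD1 a) //= eqxx mul1n big1 ?addn0 // => v /negbTE.
by rewrite eq_sym => ->.
Qed.

Lemma sum_bool_card (P : pred V) : \sum_v (P v : nat) = #|[set v | P v]|.
Proof.
rewrite -sum1_card [RHS]big_mkcond /=; apply: eq_bigr => v _.
by rewrite inE; case: (P v).
Qed.



Lemma sum_split2 (I : finType) (f1 f2 : I -> V) (G : I -> nat) :
  \sum_i G i = \sum_v \sum_z \sum_i ((f1 i == v) && (f2 i == z)) * G i.
Proof.
have -> : \sum_v \sum_z \sum_i ((f1 i == v) && (f2 i == z)) * G i =
          \sum_v \sum_i \sum_z ((f1 i == v) && (f2 i == z)) * G i.
  by apply: eq_bigr => v _; rewrite exchange_big.
rewrite exchange_big /=; apply: eq_bigr => i _.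
have -> : \sum_v \sum_z ((f1 i == v) && (f2 i == z)) * G i =
          \sum_v (f1 i == v) * (\sum_z (f2 i == z) * G i).
  apply: eq_bigr => v _; rewrite big_distrr /=; apply: eq_bigr => z _.
  by case: (f1 i == v); case: (f2 i == z); rewrite ?mul0n ?mul1n ?muln0.
by rewrite sum_eqb sum_eqb.
Qed.

Variable sim : rel V.
Variables (Dm s' : nat).
Hypothesis hdeg : forall v, #|[set w | E v w]| <= Dm.
Hypothesis hs : forall u v, #|[set w | E v w && sim u w]| <= s'.
Variable K : nat.

Definition Sq (q : {ffun 'I_K.+2 -> V}) :=
  [exists t : 'I_K.+1, sim (q (inord t)) (q (inord K.+1))].

Definition Zc := \sum_(pq : {ffun 'I_K.+2 -> V} * {ffun 'I_K.+2 -> V})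
  [&& walk pq.1, walk pq.2, pq.1 (inord K.+1) == pq.2 (inord 0),
      pq.2 (inord K.+1) == pq.1 (inord 0) & Sq pq.2].

Definition Qc z v := \sum_(q : {ffun 'I_K.+2 -> V})
  [&& walk q, q (inord 0) == z, q (inord K.+1) == v & Sq q].

Definition Rc z w v := \sum_(r : {ffun 'I_K.+1 -> V})
  [&& walk r, r (inord 0) == z, r (inord K) == w & [exists t : 'I_K.+1, sim (r t) v]].

Lemma Zc_eq : Zc = \sum_v \sum_z W K.+1 v z * Qc z v.
Proof.
rewrite /Zc -(pair_bigA _ (fun p q => ([&& walk p, walk q, p (inord K.+1) == q (inord 0),
      q (inord K.+1) == p (inord 0) & Sq q] : nat))) /=.
have -> : \sum_(p : {ffun 'I_K.+2 -> V}) \sum_(q : {ffun 'I_K.+2 -> V})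
   ([&& walk p, walk q, p (inord K.+1) == q (inord 0),
      q (inord K.+1) == p (inord 0) & Sq q] : nat)
   = \sum_(p : {ffun 'I_K.+2 -> V}) walk p * Qc (p (inord K.+1)) (p (inord 0)).
  apply: eq_bigr => p _; rewrite /Qc big_distrr /=; apply: eq_bigr => q _.
  case: (walk p); rewrite ?mul0n ?mul1n //=.
  by rewrite [p _ == _]eq_sym [q _ == p _]eq_sym.
rewrite (sum_split2 (fun p : {ffun 'I_K.+2 -> V} => p (inord 0))
                    (fun p => p (inord K.+1))).
apply: eq_bigr => v _; apply: eq_bigr => z _.
change (\sum_w W K v w * E w z) with (W K.+1 v z).
rewrite -walk_count big_distrl /=; apply: eq_bigr => p _.
case: eqP => [->|_]; last by rewrite /= ?andbF.
case: eqP => [->|_]; last by rewrite /= ?andbF.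
by rewrite !andbT mul1n.
Qed.

Lemma Qc_eq z v : Qc z v = \sum_w E w v * Rc z w v.
Proof.
rewrite /Qc (@sum_join K) /=.
have -> : \sum_(g : {ffun 'I_K.+1 -> V}) \sum_(c : V)
   ([&& walk (join g c), join g c (inord 0) == z, join g c (inord K.+1) == v
      & Sq (join g c)] : nat)
  = \sum_(g : {ffun 'I_K.+1 -> V})
      [&& walk g, g (inord 0) == z, E (g (inord K)) v & [exists t : 'I_K.+1, sim (g t) v]].
  apply: eq_bigr => g _.
  have -> : \sum_(c : V) ([&& walk (join g c), join g c (inord 0) == z,
       join g c (inord K.+1) == v & Sq (join g c)] : nat)
     = \sum_(c : V) (v == c) * [&& walk g, g (inord 0) == z, E (g (inord K)) c
             & [exists t : 'I_K.+1, sim (g t) c]].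
    apply: eq_bigr => c _.
    rewrite walk_join join_last join_le // /Sq join_last.
    have -> : [exists t : 'I_K.+1, sim (join g c (inord t)) c] =
              [exists t : 'I_K.+1, sim (g t) c].
      apply: eq_existsb => t; rewrite join_le ?inord_val //; exact: (ltn_ord t).
    rewrite [c == v]eq_sym; case: (v == c); rewrite ?andbF ?mul0n ?mul1n //=.
    by case: (walk g); case: (E _ c); case: (g _ == z).
  by rewrite sum_eqb.
rewrite (partition_big (fun g : {ffun 'I_K.+1 -> V} => g (inord K)) xpredT) //=.
apply: eq_bigr => w _; rewrite /Rc big_distrr /= big_mkcond /=.
apply: eq_bigr => r _.
case: eqP => [->|_]; last by rewrite /= !andbF muln0.
by case: (E w v); rewrite /= ?andbT ?andbF ?mul1n ?mul0n.
Qed.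

Lemma triple_sum (F : V -> V -> V -> nat) :
  \sum_(t : (V * V) * V) F t.1.1 t.1.2 t.2 = \sum_v \sum_z \sum_w F v z w.
Proof.
rewrite -(pair_bigA _ (fun p w => F p.1 p.2 w)) /=.
by rewrite -(pair_bigA _ (fun v z => \sum_w F v z w)).
Qed.

Lemma hh_nested m : hh m = \sum_a \sum_b W m a b ^ 2.
Proof. by rewrite /hh -(pair_bigA _ (fun a b => W m a b ^ 2)). Qed.

Lemma deg_sum v : \sum_w (E w v : nat) <= Dm.
Proof.
rewrite (eq_bigr (fun w => (E v w : nat))) ?sum_bool_card ?hdeg //.
by move=> w _; rewrite Esym.
Qed.

Lemma Rc_le z w v : Rc z w v <= W K z w.
Proof.
rewrite -walk_count /Rc; apply: leq_sum => r _.
by case: (walk r); case: (_ == z); case: (_ == w); case: [exists _, _].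
Qed.

Lemma exists_le (P : 'I_K.+1 -> bool) (b : bool) :
  (b && [exists t, P t] : nat) <= \sum_t (b && P t : nat).
Proof.
case: b => //=; case: existsP => [[t Pt]|_] //.
by rewrite (bigD1 t) //= Pt.
Qed.

Lemma ER_sum z w : \sum_v E w v * Rc z w v <= K.+1 * s' * W K z w.
Proof.
rewrite /Rc.
have -> : \sum_v E w v * (\sum_(r : {ffun 'I_K.+1 -> V})
     ([&& walk r, r (inord 0) == z, r (inord K) == w & [exists t, sim (r t) v]] : nat))
  = \sum_(r : {ffun 'I_K.+1 -> V}) [&& walk r, r (inord 0) == z & r (inord K) == w] *
       \sum_v (E w v && [exists t, sim (r t) v] : nat).
  under eq_bigr do rewrite big_distrr.
  rewrite exchange_big /=; apply: eq_bigr => r _; rewrite big_distrr /=.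
  apply: eq_bigr => v _.
  by case: (E w v); case: (walk r); case: (_ == z); case: (_ == w); case: [exists _, _].
rewrite [X in _ <= X]mulnC -walk_count big_distrl /=; apply: leq_sum => r _.
rewrite -andbA leq_mul2l; apply/orP; right.
apply: (@leq_trans (\sum_v \sum_t (E w v && sim (r t) v : nat))).
  by apply: leq_sum => v _; exact: (exists_le (fun t => sim (r t) v)).
rewrite exchange_big /= -[X in _ <= X * _]card_ord -sum_nat_const.
apply: leq_sum => t _; rewrite sum_bool_card; exact: hs.
Qed.


Lemma Zc_bound : Zc ^ 2 <= (Dm * hh K.+1) * (K.+1 * s' * hh K).
Proof.
have -> : Zc = \sum_(t : (V * V) * V)
    (E t.2 t.1.1 * W K.+1 t.1.1 t.1.2) * (E t.2 t.1.1 * Rc t.1.2 t.2 t.1.1).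
  rewrite (triple_sum (fun v z w => (E w v * W K.+1 v z) * (E w v * Rc z w v))).
  rewrite Zc_eq; apply: eq_bigr => v _; apply: eq_bigr => z _.
  rewrite Qc_eq big_distrr /=; apply: eq_bigr => w _.
  by case: (E w v); rewrite ?mul0n ?muln0 ?mul1n.
apply: (leq_trans (CS_nat _ _)); apply: leq_mul.
  rewrite (triple_sum (fun v z w => (E w v * W K.+1 v z) ^ 2)).
  rewrite hh_nested big_distrr /=; apply: leq_sum => v _.
  rewrite big_distrr /=; apply: leq_sum => z _.
  have -> : \sum_w (E w v * W K.+1 v z) ^ 2 = W K.+1 v z ^ 2 * \sum_w (E w v : nat).
    rewrite big_distrr /=; apply: eq_bigr => w _.
    by case: (E w v); rewrite ?mul0n ?muln0 ?mul1n ?muln1 ?exp0n.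
  by rewrite mulnC leq_mul2r deg_sum orbT.
rewrite (triple_sum (fun v z w => (E w v * Rc z w v) ^ 2)).
rewrite hh_nested big_distrr /= exchange_big /=; apply: leq_sum => z _.
rewrite big_distrr /= exchange_big /=; apply: leq_sum => w _.
apply: (@leq_trans (\sum_v W K z w * (E w v * Rc z w v))).
  apply: leq_sum => v _; rewrite expnS expn1 leq_mul2r; apply/orP; right.
  by case: (E w v); rewrite ?mul0n ?mul1n ?Rc_le.
rewrite -big_distrr /= mulnC expnS expn1 mulnA leq_mul2r ER_sum orbT //.
Qed.



Local Notation N := (2 * K.+1).

Lemma N_gt0 : 0 < N. Proof. by rewrite muln_gt0. Qed.

Definition ix (i : nat) : 'I_N := Ordinal (ltn_pmod i N_gt0).

Lemma ix_val (i : 'I_N) : ix i = i.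
Proof. by apply/val_inj; rewrite /= modn_small. Qed.

Lemma ix_small i : i < N -> (ix i : nat) = i.
Proof. by move=> h; rewrite /= modn_small. Qed.

Lemma ixS i : ix i.+1 = ordS (ix i).
Proof. by apply/val_inj; rewrite /= -addn1 -modnDml addn1. Qed.

Lemma ixN i : ix (i + N) = ix i.
Proof. by apply/val_inj; rewrite /= modnDr. Qed.

Lemma hom_adj x : hom_cycle E x -> forall i, E (x (ix i)) (x (ix i.+1)).
Proof. by move=> /forallP h i; rewrite ixS. Qed.

Definition pos (d : bool) (j t : nat) := if d then j + t else j + N - t.

Lemma adj_pos x d j t : hom_cycle E x -> t < N ->
  E (x (ix (pos d j t))) (x (ix (pos d j t.+1))).
Proof.
move=> hx ht; case: d; rewrite /pos.
  by rewrite addnS; exact: hom_adj.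
have -> : j + N - t = (j + N - t.+1).+1 by lia.
by rewrite Esym; exact: hom_adj.
Qed.

Definition Pc d j (x : {ffun 'I_N -> V}) : {ffun 'I_K.+2 -> V} :=
  [ffun t : 'I_K.+2 => x (ix (pos d j t))].
Definition Qc' d j (x : {ffun 'I_N -> V}) : {ffun 'I_K.+2 -> V} :=
  [ffun t : 'I_K.+2 => x (ix (pos d j (K.+1 + t)))].

Lemma Pc_at d j x t : t <= K.+1 -> Pc d j x (inord t) = x (ix (pos d j t)).
Proof. by move=> h; rewrite ffunE inordK. Qed.
Lemma Qc_at d j x t : t <= K.+1 -> Qc' d j x (inord t) = x (ix (pos d j (K.+1 + t))).
Proof. by move=> h; rewrite ffunE inordK. Qed.

Lemma walk_Pc d j x : hom_cycle E x -> walk (Pc d j x).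
Proof.
move=> hx; apply/allP => i; rewrite mem_iota => /andP[_ hi].
rewrite !Pc_at; try lia. apply: adj_pos => //; lia.
Qed.

Lemma walk_Qc d j x : hom_cycle E x -> walk (Qc' d j x).
Proof.
move=> hx; apply/allP => i; rewrite mem_iota => /andP[_ hi].
rewrite !Qc_at; try lia. rewrite addnS; apply: adj_pos => //; lia.
Qed.

Lemma pos_end d (j : 'I_N) : ix (pos d j (K.+1 + K.+1)) = j.
Proof.
have e : K.+1 + K.+1 = N by lia.
rewrite e /pos; case: d; first by rewrite ixN ix_val.
by rewrite addnK ix_val.
Qed.

Lemma pos_start d (j : 'I_N) : ix (pos d j 0) = j.
Proof. by rewrite /pos; case: d; rewrite ?addn0 ?subn0 ?ixN ix_val. Qed.

Lemma Pc_Qc_match d (j : 'I_N) x :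
  (Pc d j x (inord K.+1) == Qc' d j x (inord 0)) &&
  (Qc' d j x (inord K.+1) == Pc d j x (inord 0)).
Proof.
by rewrite Pc_at // Qc_at // Qc_at // Pc_at // addn0 pos_end pos_start !eqxx.
Qed.

Lemma surj_true (j : 'I_N) (i : 'I_N) : exists2 t, t <= N & ix (pos true j t) = i.
Proof.
rewrite /pos; have hi := ltn_ord i; have hj := ltn_ord j.
case: (leqP (j : nat) i) => hji.
  exists (i - j); first lia.
  apply/val_inj => /=; rewrite modn_small; lia.
exists (i + N - j); first lia.
have -> : j + (i + N - j) = i + N by lia.
by rewrite ixN ix_val.
Qed.

Lemma surj_pos d (j : 'I_N) (i : 'I_N) : exists2 t, t <= N & ix (pos d j t) = i.
Proof.
case: d; first exact: surj_true.
have [t ht <-] := surj_true j i.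
exists (N - t); first lia.
by rewrite /pos; congr ix; lia.
Qed.

Lemma PQ_inj d (j : 'I_N) x y :
  Pc d j x = Pc d j y -> Qc' d j x = Qc' d j y -> x = y.
Proof.
move=> hP hQ; apply/ffunP => i.
have [t ht <-] := surj_pos d j i.
case: (leqP t K.+1) => htk.
  by rewrite -!Pc_at // hP.
have -> : t = K.+1 + (t - K.+1) by lia.
by rewrite -!Qc_at ?hQ //; lia.
Qed.

Lemma cover x : hom_cycle E x ->
  [exists i, exists j, (i != j) && sim (x i) (x j)] ->
  exists (j : 'I_N) (d : bool), Sq (Qc' d j x).
Proof.
move=> hx /existsP[i /existsP[j /andP[hij hs']]].
exists j.
have [t0 ht0 e0] := surj_true j i.
rewrite /pos in e0.
have t0N : t0 != N by apply: contraNneq hij => h; apply/eqP; rewrite -e0 h ixN ix_val.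
have t00 : t0 != 0 by apply: contraNneq hij => h; apply/eqP; rewrite -e0 h addn0 ix_val.
case: (leqP K.+1 t0) => hk.
  exists true; apply/existsP; exists (inord (t0 - K.+1)).
  rewrite Qc_at ?inordK; try lia.
  rewrite Qc_at // pos_end /pos.
  have -> : j + (K.+1 + (t0 - K.+1)) = j + t0 by lia.
  by rewrite e0.
exists false; apply/existsP; exists (inord (K.+1 - t0)).
rewrite Qc_at ?inordK; try lia.
rewrite Qc_at // pos_end /pos.
have -> : j + N - (K.+1 + (K.+1 - t0)) = j + t0 by lia.
by rewrite e0.
Qed.

Lemma sum_bool_cardT (I : finType) (P : pred I) : \sum_i (P i : nat) = #|[set i | P i]|.
Proof.
rewrite -sum1_card [RHS]big_mkcond /=; apply: eq_bigr => v _.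
by rewrite inE; case: (P v).
Qed.

Lemma count_le (d : bool) (j : 'I_N) :
  #|[set x : {ffun 'I_N -> V} | hom_cycle E x && Sq (Qc' d j x)]| <= Zc.
Proof.
rewrite /Zc sum_bool_cardT.
rewrite -(@card_in_imset _ _ (fun x => (Pc d j x, Qc' d j x))); last first.
  by move=> x y _ _ [] hP hQ; exact: PQ_inj hP hQ.
apply: subset_leq_card; apply/fintype.subsetP => pq /imsetP [x]; rewrite inE => /andP [hx hsq] ->.
rewrite inE /= walk_Pc // walk_Qc // hsq andbT.
by have := Pc_Qc_match d j x.
Qed.

Lemma B_le : #|[set x : {ffun 'I_N -> V} | hom_cycle E x &&
        [exists i, exists j, (i != j) && sim (x i) (x j)]]| <= N * 2 * Zc.
Proof.
rewrite -sum_bool_cardT.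
apply: (@leq_trans (\sum_(x : {ffun 'I_N -> V}) \sum_(j : 'I_N) \sum_(d : bool)
           (hom_cycle E x && Sq (Qc' d j x) : nat))).
  apply: leq_sum => x _.
  case hx: (hom_cycle E x) => //=; case hb: [exists _, _] => //=.
  have [j [d hsq]] := cover hx hb.
  rewrite (bigD1 j) //= (bigD1 d) //= hsq.
  by rewrite -addnA leq_addr.
rewrite exchange_big /=.
apply: (@leq_trans (\sum_(j : 'I_N) \sum_(d : bool) Zc)); last first.
  by rewrite !sum_nat_const !card_ord card_bool mulnA.
apply: leq_sum => j _; rewrite exchange_big /=; apply: leq_sum => d _.
by rewrite sum_bool_cardT; exact: count_le.
Qed.

Definition glue (p q : {ffun 'I_K.+2 -> V}) : {ffun 'I_N -> V} :=
  [ffun i : 'I_N => if (i : nat) < K.+1 then p (inord i) else q (inord (i - K.+1))].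

Lemma Pc_glue (p q : {ffun 'I_K.+2 -> V}) : p (inord K.+1) = q (inord 0) -> Pc true 0 (glue p q) = p.
Proof.
move=> hm; apply/ffunP => t; rewrite !ffunE /pos add0n.
have ht := ltn_ord t.
rewrite ix_small; last lia.
case: ifP => h; first by rewrite inord_val.
have -> : t = inord K.+1 by apply/val_inj; rewrite /= inordK //; lia.
by rewrite inordK // subnn hm.
Qed.

Lemma Qc_glue (p q : {ffun 'I_K.+2 -> V}) : q (inord K.+1) = p (inord 0) -> Qc' true 0 (glue p q) = q.
Proof.
move=> hm; apply/ffunP => t; rewrite !ffunE /pos add0n.
have ht := ltn_ord t.
case: (ltnP t K.+1) => htk.
  rewrite ix_small; last lia.
  rewrite ifN; last lia.
  have -> : K.+1 + t - K.+1 = t by lia.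
  by rewrite inord_val.
have -> : K.+1 + t = 0 + N by lia.
rewrite ixN.
have -> : t = inord K.+1 by apply/val_inj; rewrite /= inordK //; lia.
have -> : (ix 0 : nat) = 0 by rewrite /= mod0n.
by rewrite /= hm.
Qed.

Lemma hom_of_PQ x : walk (Pc true 0 x) -> walk (Qc' true 0 x) -> hom_cycle E x.
Proof.
move=> /allP hP /allP hQ; apply/forallP => i.
have hi := ltn_ord i.
case: (ltnP i K.+1) => hik.
  have := hP i; rewrite mem_iota /= => /(_ hik).
  rewrite !Pc_at; try lia.
  by rewrite /pos add0n ixS ix_val.
have := hQ (i - K.+1); rewrite mem_iota /=.
have h1 : i - K.+1 < K.+1 by lia.
move=> /(_ h1); rewrite !Qc_at; try lia.
rewrite /pos !add0n addnS.
have -> : K.+1 + (i - K.+1) = i by lia.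
by rewrite ixS ix_val.
Qed.

End Walks.

Lemma hh_le (V : finType) (E : rel V) (Esym : symmetric E) (K : nat) :
  hh E K.+1 <= #|[set x : {ffun 'I_(2 * K.+1) -> V} | hom_cycle E x]|.
Proof.
have -> : hh E K.+1 = Zc E (fun _ _ => true) K.
  rewrite Zc_eq hh_nested; apply: eq_bigr => v _; apply: eq_bigr => z _.
  rewrite /Qc expnS expn1; congr (_ * _); rewrite (W_sym Esym) -walk_count.
  apply: eq_bigr => q _; rewrite /Sq /=.
  have -> : [exists t : 'I_K.+1, true] by apply/existsP; exists ord0.
  by rewrite !andbA andbT.
rewrite /Zc sum_bool_cardT.
rewrite -(@card_in_imset _ _ (fun pq => glue pq.1 pq.2)); last first.
  move=> [p q] [p' q']; rewrite !inE /= => /and5P [_ _ h1 h2 _] /and5P [_ _ h1' h2' _] e.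
  have e1 := congr1 (Pc true 0) e; have e2 := congr1 (Qc' true 0) e.
  rewrite /= (Pc_glue (eqP h1)) (Pc_glue (eqP h1')) in e1.
  rewrite /= (Qc_glue (eqP h2)) (Qc_glue (eqP h2')) in e2.
  by rewrite e1 e2.
apply: subset_leq_card; apply/fintype.subsetP => x /imsetP [[p q]].
rewrite inE /= => /and5P [hp hq h1 h2 _] ->.
rewrite inE; apply: hom_of_PQ.
  by rewrite (Pc_glue (eqP h1)).
by rewrite (Qc_glue (eqP h2)).
Qed.

Lemma nat_final (B Dm s' n Hc h0 h1 Z K : nat) :
  (B <= (2 * K.+1) * 2 * Z)%N ->
  (Z ^ 2 <= (Dm * h1) * (K.+1 * s' * h0))%N ->
  (h0 ^ K.+1 <= n * h1 ^ K)%N -> (h1 <= Hc)%N ->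
  (B ^ (2 * K.+1) <= (16 * K.+1 ^ 3 * s' * Dm) ^ K.+1 * n * Hc ^ (K.+1 + K))%N.
Proof.
move=> hB hZ hch hH.
set C := (16 * K.+1 ^ 3 * s' * Dm)%N.
have e1 : (B ^ 2 <= C * (h1 * h0))%N.
  apply: (@leq_trans ((2 * K.+1 * 2) ^ 2 * Z ^ 2)).
    by rewrite -expnMn leq_exp2r.
  apply: (@leq_trans ((2 * K.+1 * 2) ^ 2 * ((Dm * h1) * (K.+1 * s' * h0)))).
    by rewrite leq_mul2l hZ orbT.
  by rewrite leq_eqVlt; apply/orP; left; apply/eqP; rewrite /C; ring.
have e2 : (B ^ (2 * K.+1) <= C ^ K.+1 * (h1 ^ K.+1 * h0 ^ K.+1))%N.
  rewrite expnM -!expnMn leq_exp2r //.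
apply: (leq_trans e2).
apply: (@leq_trans (C ^ K.+1 * (h1 ^ K.+1 * (n * h1 ^ K)))).
  by rewrite leq_mul2l leq_mul2l hch !orbT.
have -> : (C ^ K.+1 * (h1 ^ K.+1 * (n * h1 ^ K)) = C ^ K.+1 * n * h1 ^ (K.+1 + K))%N.
  by rewrite expnD; ring.
by rewrite leq_mul2l leq_exp2r // hH orbT.
Qed.

Import Order.TTheory GRing.Theory Num.Theory.
Local Open Scope ring_scope.

Lemma powR_exp (R : realType) (b x : R) (n : nat) : 0 <= b ->
  (powR b x) ^+ n = powR b (x * n%:R).
Proof. by move=> b0; rewrite -powR_mulrn ?powR_ge0 // -powRrM. Qed.

Unset Implicit Arguments.

Theorem lemma2p2 (R : realType) (V : finType) (E : rel V) (sim : rel V)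
  (k : nat) (s : R) :
  (2 <= k)%N ->
  simple_graph E ->
  symmetric sim ->
  (forall u v : V, (#|[set w | E v w && sim u w]|)%:R <= s) ->
  (#|[set x : {ffun 'I_(2 * k)%N -> V} | hom_cycle E x &&
        [exists i, exists j, (i != j) && sim (x i) (x j)]]|)%:R
  <= 32 * powR (k%:R) (3 / 2) * powR s (1 / 2) * powR ((max_deg E)%:R) (1 / 2)
     * powR (#|V|%:R) (1 / (2 * k)%N%:R)
     * powR ((hom_count (@cycle_rel (2 * k)%N) E)%:R) (1 - 1 / (2 * k)%N%:R).
Proof.
move=> hk [Esym _] _ hs.
case: k hk => [//|K] hK.
set B := #|[set x : {ffun 'I_(2 * K.+1)%N -> V} | _]|.
case: (posnP B) => [->|Bpos].
  by rewrite ?mulr_ge0 ?powR_ge0.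
have [x _] : exists x, x \in [set x : {ffun 'I_(2 * K.+1)%N -> V} | hom_cycle E x &&
        [exists i, exists j, (i != j) && sim (x i) (x j)]].
  by apply/card_gt0P.
have v0 : V := x (Ordinal (N_gt0 K)).
have s0 : 0 <= s := le_trans (ler0n _ _) (hs v0 v0).
set s' := (\max_(p : V * V) #|[set w | E p.2 w && sim p.1 w]|)%N.
have hs' : forall u v, (#|[set w | E v w && sim u w]| <= s')%N.
  by move=> u v; exact: (@leq_bigmax _ (fun p : V * V => #|[set w | E p.2 w && sim p.1 w]|) (u, v)).
have s's : (s'%:R : R) <= s.
  rewrite /s'; elim/big_ind: _ => [|a b ha hb|p _]; first by [].
    by rewrite /maxn; case: ifP.
  exact: hs.
set Dm := max_deg E.
have hdeg : forall v, (#|[set w | E v w]| <= Dm)%N.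
  by move=> v; exact: (@leq_bigmax _ (fun v => #|[set w | E v w]|) v).
have hB := B_le Esym sim K.
have hZ := Zc_bound Esym hdeg hs' K.
have hch := hh_chain Esym K; rewrite hh0 in hch.
set Hc := hom_count (@cycle_rel (2 * K.+1)) E.
have hH : (hh E K.+1 <= Hc)%N.
  apply: leq_trans (hh_le Esym K) _; apply: subset_leq_card.
  apply/fintype.subsetP => f; rewrite !inE => /forallP hf.
  apply/forallP => a; apply/forallP => b; apply/implyP; rewrite /cycle_rel.
  case/orP => /eqP ->; first exact: hf.
  by rewrite Esym; exact: hf.
have hN := nat_final hB hZ hch hH.
have NR0 : ((2 * K.+1)%N%:R : R) != 0 by rewrite pnatr_eq0 muln_eq0.
have kS : (K.+1%:R : R) = K%:R + 1 by rewrite -natr1.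
have ex1 : (3 / 2 : R) * (2 * K.+1)%N%:R = (3 * K.+1)%N%:R.
  by rewrite !natrM kS; lra.
have ex2 : (1 / 2 : R) * (2 * K.+1)%N%:R = K.+1%:R.
  by rewrite !natrM kS; lra.
have ex3 : (1 / (2 * K.+1)%N%:R : R) * (2 * K.+1)%N%:R = 1.
  by rewrite mul1r mulVf.
have ex4 : (1 - 1 / (2 * K.+1)%N%:R : R) * (2 * K.+1)%N%:R = (K.+1 + K)%N%:R.
  by rewrite mulrBl ex3 mul1r natrD !natrM kS; lra.
rewrite -(ler_pXn2r (isT : (0 < 2 * K.+1)%N)) ?nnegrE ?ler0n ?mulr_ge0 ?powR_ge0 //.
rewrite !exprMn !powR_exp ?ler0n // ex1 ex2 ex3 ex4 !powR_mulrn ?ler0n // powRr1 ?ler0n //.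
apply: (le_trans (_ : _ <= ((16 * K.+1 ^ 3 * s' * Dm) ^ K.+1 * #|V| * Hc ^ (K.+1 + K))%N%:R)).
  by rewrite -natrX ler_nat.
rewrite !(natrM, natrX) !exprMn.
have e3 : (K.+1%:R : R) ^+ K.+1 * (K.+1%:R ^+ K.+1 * K.+1%:R ^+ K.+1) = K.+1%:R ^+ (3 * K.+1).
  by rewrite -!exprD; congr (_ ^+ _); lia.
rewrite e3.
apply: ler_wpM2r; first by rewrite exprn_ge0 ?ler0n.
apply: ler_wpM2r; first by rewrite ler0n.
apply: ler_wpM2r; first by rewrite exprn_ge0 ?ler0n.
apply: ler_pM.
- by rewrite mulr_ge0 ?exprn_ge0 ?ler0n.
- by rewrite exprn_ge0 ?ler0n.
- apply: ler_wpM2r; first by rewrite exprn_ge0 ?ler0n.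
  have h16 : (16 ^ K.+1 <= 32 ^ (2 * K.+1))%N.
    apply: (@leq_trans (32 ^ K.+1)); first by rewrite leq_exp2r.
    by rewrite leq_pexp2l // leq_pmull.
  by rewrite -(ler_nat R) !natrX in h16.
- by rewrite ler_pXn2r // ?nnegrE ?ler0n.
Qed.
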